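(* There is an absolute constant $c>0$ such that for every (nondegenerate) hyperbolic triangle $T$ with height $h$, the area of $T$ is at least $c\cdot\min(1,h^2)$.
   Context: The hyperbolic plane is the complete simply connected Riemannian surface of constant curvature $-1$. The height of a hyperbolic triangle is the minimum, over its three vertices, of the hyperbolic distance from the vertex to the opposite side. *)

(* Defs.v *)
(* Hyperbolic plane modelled by the Beltrami-Klein disk. *)
From HB Require Import structures.
From mathcomp Require Import all_boot all_order all_algebra.
From mathcomp Require Import all_classical all_reals all_analysis.
Set Implicit Arguments. Unset Strict Implicit. Unset Printing Implicit Defensive.
Import Order.TTheory GRing.Theory Num.Theory.
Local Open Scope classical_set_scope.
Local Open Scope ring_scope.

Section Klein.
Variable R : realType.
Definition pt := (R * R)%type.

Definition dot (p q : pt) : R := p.1 * q.1 + p.2 * q.2.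
Definition nrm2 (p : pt) : R := dot p p.

Definition in_disk (p : pt) : Prop := nrm2 p < 1.

Definition arcosh (x : R) : R := ln (x + Num.sqrt (x ^+ 2 - 1)).

Definition hdist (p q : pt) : R :=
  arcosh ((1 - dot p q) / Num.sqrt ((1 - nrm2 p) * (1 - nrm2 q))).

Definition comb3 (a b c : R) (A B C : pt) : pt :=
  (a * A.1 + b * B.1 + c * C.1, a * A.2 + b * B.2 + c * C.2).

(* geodesic segment [B,C]: Klein geodesics are Euclidean chords *)
Definition hsegment (B C : pt) : set pt :=
  [set comb3 t (1 - t) 0 B C B | t in `[0, 1]%classic].

Definition htriangle (A B C : pt) : set pt :=
  [set P | exists a b c : R, [/\ 0 <= a, 0 <= b, 0 <= c, a + b + c = 1
                              & P = comb3 a b c A B C]].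

(* nondegenerate: vertices not on a common geodesic (= not collinear) *)
Definition noncollinear (A B C : pt) : Prop :=
  (B.1 - A.1) * (C.2 - A.2) - (B.2 - A.2) * (C.1 - A.1) != 0.

Definition hdist_set (P : pt) (S : set pt) : R := inf [set hdist P X | X in S].

Definition height (A B C : pt) : R :=
  Num.min (hdist_set A (hsegment B C))
          (Num.min (hdist_set B (hsegment C A)) (hdist_set C (hsegment A B))).

(* hyperbolic area element of the Klein model: dx dy / (1 - x^2 - y^2)^(3/2) *)
Definition area_density (p : pt) : R :=
  (Num.sqrt (1 - nrm2 p) ^+ 3)^-1.

Definition harea (S : set pt) : \bar R :=
  (\int[((@lebesgue_measure R) \x (@lebesgue_measure R))%E]_(p in S)
      (area_density p)%:E)%E.
End Klein.

(* Main.v *)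
Require Import Defs.
From HB Require Import structures.
From mathcomp Require Import all_boot all_order all_algebra.
From mathcomp Require Import all_classical all_reals all_analysis.
From mathcomp Require Import ring lra.
Import Order.TTheory GRing.Theory Num.Theory.
Local Open Scope ring_scope.
Local Open Scope classical_set_scope.

Lemma int_lbE d (T : measurableType d) (R : realType)
  (mu : {measure set T -> \bar R}) (D A : set T) (f : T -> \bar R) (m : R) :
  measurable A -> 0 <= m -> (forall x, (0 <= f x)%E) ->
  (forall x, A x -> D x /\ (m%:E <= f x)%E) ->
  (m%:E * mu A <= \int[mu]_(x in D) f x)%E.
Proof.
move=> mA m0 f0 hA.
rewrite ge0_integralE; last by move=> x _.
apply: ereal_sup_ubound => /=.
exists (scale_nnsfun (indic_nnsfun R mA) m0).
  move=> x /=; rewrite /patch /measurable_realfun.mindic indicE.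
  case: (boolP (x \in A)) => xA.
    have [Dx le] := hA x (set_mem xA).
    rewrite ifT; last by apply/mem_set.
    by rewrite mulr1.
  rewrite mulr0; case: ifP => _ //.
have := sintegralrM mu m (indic_nnsfun R mA).
rewrite /= /measurable_realfun.mindic sintegral_indic => <-.
by [].
Qed.

Definition par (R : realType) (x0 w k c0 b : R) : set (pt R) :=
  [set p | x0 - w <= p.1 <= x0 + w /\ c0 - b <= p.2 - k * p.1 <= c0 + b].

Arguments par {R}.
Lemma par_meas (R : realType) (x0 w k c0 b : R) :
  measurable (par x0 w k c0 b).
Proof.
have -> : par x0 w k c0 b = (setT `&` fst @^-1` `[x0 - w, x0 + w]) `&`
   (setT `&` (fun p : pt R => p.2 - k * p.1) @^-1` `[c0 - b, c0 + b]).
  apply/seteqP; split => p /=.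
    by move=> [h1 h2]; split; split => //; rewrite in_itv.
  by move=> [[_ h1] [_ h2]]; move: h1 h2; rewrite !in_itv /=.
apply: measurableI.
  by apply: measurable_fst => //; exact: measurable_itv.
have mg : measurable_fun setT (fun p : pt R => p.2 - k * p.1).
  rewrite (_ : (fun p : pt R => p.2 - k * p.1) = (snd \- (cst k \* fst))%R) //.
  apply: measurable_realfun.measurable_funB; first exact: measurable_snd.
  apply: measurable_realfun.measurable_funM; first exact: measurable_cst.
  exact: measurable_fst.
by apply: mg => //; exact: measurable_itv.
Qed.

Arguments par {R}.
Lemma par_measure (R : realType) (x0 w k c0 b : R) : 0 < w -> 0 < b ->
  (((2 * b) * (2 * w))%:E <=
    ((@lebesgue_measure R) \x (@lebesgue_measure R))%E (par x0 w k c0 b))%E.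
Proof.
move=> w0 b0.
rewrite /product_measure1 EFinM.
have -> : (2 * w)%:E = lebesgue_measure (`[x0 - w, x0 + w] : set R).
  rewrite lebesgue_measure_itv /= lte_fin ifT; last by lra.
  congr (_%:E); lra.
apply: int_lbE.
- exact: measurable_itv.
- lra.
- by move=> x; exact: measure_ge0.
move=> x; rewrite /= in_itv /= => hx; split => //.
have -> : xsection (par x0 w k c0 b) x = `[c0 - b + k * x, c0 + b + k * x].
  apply/seteqP; split => y /=; rewrite /xsection /= inE /par /= in_itv /=.
    move=> [_ /andP[h1 h2]]; apply/andP; split; lra.
  move=> /andP[h1 h2]; split => //; apply/andP; split; lra.
rewrite lebesgue_measure_itv /= lte_fin ifT; last by lra.
rewrite lee_fin; lra.
Qed.

Section S.
Variable R : realType.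
Implicit Types V X : pt R.

Lemma dot_lt1 V X : in_disk V -> in_disk X -> 0 < 1 - dot V X.
Proof.
rewrite /in_disk /nrm2 /dot.
case: V => v1 v2; case: X => x1 x2 /= hV hX.
have : 0 <= (v1 - x1) ^+ 2 + (v2 - x2) ^+ 2 by rewrite addr_ge0 // sqr_ge0.
nra.
Qed.

Lemma aczel V X : in_disk V -> in_disk X ->
  (1 - nrm2 V) * (1 - nrm2 X) <= (1 - dot V X) ^+ 2.
Proof.
rewrite /in_disk /nrm2 /dot => hV hX.
move: hV hX; case: V => v1 v2; case: X => x1 x2 /= hV hX.
have h1 : (v1 * x2 - v2 * x1) ^+ 2 <= ((v1 - x1) ^+ 2 + (v2 - x2) ^+ 2) * (x1 * x1 + x2 * x2).
  have e : ((v1 - x1) ^+ 2 + (v2 - x2) ^+ 2) * (x1 * x1 + x2 * x2) - (v1 * x2 - v2 * x1) ^+ 2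
     = ((v1 - x1) * x1 + (v2 - x2) * x2) ^+ 2 by ring.
  by rewrite -subr_ge0 e sqr_ge0.
have e2 : (1 - (v1 * x1 + v2 * x2)) ^+ 2 - (1 - (v1 * v1 + v2 * v2)) * (1 - (x1 * x1 + x2 * x2))
   = ((v1 - x1) ^+ 2 + (v2 - x2) ^+ 2) - (v1 * x2 - v2 * x1) ^+ 2 by ring.
have h2 : ((v1 - x1) ^+ 2 + (v2 - x2) ^+ 2) * (x1 * x1 + x2 * x2) <= ((v1 - x1) ^+ 2 + (v2 - x2) ^+ 2).
  rewrite ler_piMr //; [by rewrite addr_ge0 // sqr_ge0 | exact: ltW].
rewrite -subr_ge0 e2; lra.
Qed.

Definition ch V X := (1 - dot V X) / Num.sqrt ((1 - nrm2 V) * (1 - nrm2 X)).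

Lemma ch_ge1 V X : in_disk V -> in_disk X -> 1 <= ch V X.
Proof.
move=> hV hX; rewrite /ch.
have s0 : 0 < (1 - nrm2 V) * (1 - nrm2 X).
  by apply: mulr_gt0; rewrite subr_gt0.
rewrite ler_pdivlMr ?sqrtr_gt0 // mul1r.
rewrite -(@ger0_norm _ (1 - dot V X)); last by exact/ltW/dot_lt1.
rewrite -sqrtr_sqr ler_sqrt; last by rewrite exprn_ge0 // ltW // (@dot_lt1 V X).
exact: aczel.
Qed.

Lemma hdistE V X : hdist V X = ln (ch V X + Num.sqrt (ch V X ^+ 2 - 1)).
Proof. by []. Qed.

Lemma hdist_ge0 V X : in_disk V -> in_disk X -> 0 <= hdist V X.
Proof.
move=> hV hX; rewrite hdistE; apply: ln_ge0.
have := @ch_ge1 V X hV hX; have := sqrtr_ge0 (ch V X ^+ 2 - 1); lra.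
Qed.

Lemma cosh_bound V X (s : R) : in_disk V -> in_disk X -> 0 <= s ->
  s <= (expR (hdist V X) - 1) / 2 ->
  (1 + s ^+ 2) * ((1 - nrm2 V) * (1 - nrm2 X)) <= (1 - dot V X) ^+ 2.
Proof.
move=> hV hX s0; rewrite hdistE.
set x := ch V X; set r := Num.sqrt (x ^+ 2 - 1).
have x1 : 1 <= x by exact: ch_ge1.
have r0 : 0 <= r by exact: sqrtr_ge0.
have r2 : r ^+ 2 = x ^+ 2 - 1 by rewrite sqr_sqrtr // subr_ge0 expr_ge1 // (le_trans ler01).
rewrite lnK; last by rewrite posrE; lra.
move=> hs.
have rx : x - 1 <= r by nra.
have sr : s ^+ 2 <= r ^+ 2 by nra.
have s2 : 0 < (1 - nrm2 V) * (1 - nrm2 X).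
  by apply: mulr_gt0; rewrite subr_gt0.
have xe : x ^+ 2 * ((1 - nrm2 V) * (1 - nrm2 X)) = (1 - dot V X) ^+ 2.
  rewrite /x /ch expr_div_n sqr_sqrtr ?(ltW s2) //.
  by rewrite divfK // gt_eqF.
rewrite -xe; rewrite ler_pM2r //; nra.
Qed.

End S.

Section H.
Variable R : realType.
Implicit Types V X Y Z : pt R.


Lemma seg_in_disk Y Z (t : R) : in_disk Y -> in_disk Z -> 0 <= t -> t <= 1 ->
  in_disk (comb3 t (1 - t) 0 Y Z Y).
Proof.
rewrite /in_disk /nrm2 /dot /comb3.
case: Y => y1 y2; case: Z => z1 z2 /= hY hZ t0 t1.
have e : (t * y1 + (1 - t) * z1 + 0 * y1) * (t * y1 + (1 - t) * z1 + 0 * y1) +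
  (t * y2 + (1 - t) * z2 + 0 * y2) * (t * y2 + (1 - t) * z2 + 0 * y2) =
  t * (y1 * y1 + y2 * y2) + (1 - t) * (z1 * z1 + z2 * z2) - t * (1 - t) * ((y1 - z1) ^+ 2 + (y2 - z2) ^+ 2) by ring.
rewrite e.
have : 0 <= t * (1 - t) * ((y1 - z1) ^+ 2 + (y2 - z2) ^+ 2).
  by apply: mulr_ge0; [apply: mulr_ge0; lra | apply: addr_ge0; exact: sqr_ge0].
have h2 : 0 <= (1 - t) * (1 - (z1 * z1 + z2 * z2)) by apply: mulr_ge0; lra.
have [->|tp] := eqVneq t 0.
  move=> _; lra.
have h1 : 0 < t * (1 - (y1 * y1 + y2 * y2)).
  apply: mulr_gt0; last lra. by rewrite lt_neqAle eq_sym tp.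
lra.
Qed.

Lemma hds_props V Y Z : in_disk V -> in_disk Y -> in_disk Z ->
  0 <= hdist_set V (hsegment Y Z) /\
  forall t, 0 <= t -> t <= 1 -> hdist_set V (hsegment Y Z) <= hdist V (comb3 t (1 - t) 0 Y Z Y).
Proof.
move=> hV hY hZ.
have lb : lbound [set hdist V X | X in hsegment Y Z] (0 : R).
  move=> _ [X [t ht <-] <-]; apply: hdist_ge0 => //.
  by move: ht; rewrite /= in_itv /= => /andP[t0 t1]; apply: seg_in_disk.
split.
  apply: lb_le_inf => //.
  exists (hdist V (comb3 0 (1 - 0) 0 Y Z Y)); exists (comb3 0 (1 - 0) 0 Y Z Y) => //.
  by exists 0 => //=; rewrite in_itv /= lexx ler01.
move=> t t0 t1; apply: ge_inf; first by exists 0.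
exists (comb3 t (1 - t) 0 Y Z Y) => //.
by exists t => //=; rewrite in_itv /= t0 t1.
Qed.

Lemma height_props (A B C : pt R) : in_disk A -> in_disk B -> in_disk C ->
  0 <= height A B C /\
  (forall t, 0 <= t -> t <= 1 -> height A B C <= hdist A (comb3 t (1 - t) 0 B C B)) /\
  (forall t, 0 <= t -> t <= 1 -> height A B C <= hdist B (comb3 t (1 - t) 0 C A C)) /\
  (forall t, 0 <= t -> t <= 1 -> height A B C <= hdist C (comb3 t (1 - t) 0 A B A)).
Proof.
move=> hA hB hC.
have [a0 a1] := @hds_props A B C hA hB hC.
have [b0 b1] := @hds_props B C A hB hC hA.
have [c0 c1] := @hds_props C A B hC hA hB.
rewrite /height; split; first by rewrite !le_min a0 b0 c0.
split; first by move=> t t0 t1; rewrite ge_min (a1 t t0 t1).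
split; first by move=> t t0 t1; rewrite !ge_min (b1 t t0 t1) orbT.
by move=> t t0 t1; rewrite !ge_min (c1 t t0 t1) !orbT.
Qed.
End H.

Section Core.
Variable R : realFieldType.

Lemma le2yz (x y z : R) : 1 <= x -> 1 <= y -> 1 <= z ->
  0 < 1 + 2 * x * y * z - x ^+ 2 - y ^+ 2 - z ^+ 2 -> x <= 2 * y * z.
Proof.
move=> x1 y1 z1 hD.
rewrite leNgt; apply/negP => h.
have : (x - y * z) ^+ 2 > y ^+ 2 * z ^+ 2 by nra.
nra.
Qed.



Lemma core_x (x y z s : R) : 1 <= x -> 1 <= y -> 1 <= z -> 0 <= s -> s <= 1 ->
  0 < 1 + 2 * x * y * z - x ^+ 2 - y ^+ 2 - z ^+ 2 ->
  s * (x ^+ 2 - 1) <= 1 + 2 * x * y * z - x ^+ 2 - y ^+ 2 - z ^+ 2 ->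
  s * (y ^+ 2 - 1) <= 1 + 2 * x * y * z - x ^+ 2 - y ^+ 2 - z ^+ 2 ->
  s * (z ^+ 2 - 1) <= 1 + 2 * x * y * z - x ^+ 2 - y ^+ 2 - z ^+ 2 ->
  s * (y * z * (x ^+ 2 - 1)) <= 2 * x * (1 + 2 * x * y * z - x ^+ 2 - y ^+ 2 - z ^+ 2).
Proof.
move=> x1 y1 z1 s0 s1; set D := 1 + _ - _ - _ - _ => D0 hx hy hz.
have yz1 : 1 <= y * z by nra.
have [c1|c1] := lerP y (x * z); last first.
  have e : x * (y ^+ 2 - 1) * 2 - y * z * (x ^+ 2 - 1) >= 0.
    have h1 : y ^+ 2 >= y * (x * z) by nra.
    nra.
  nra.
have [c2|c2] := lerP z (x * y); last first.
  have e : x * (z ^+ 2 - 1) * 2 - y * z * (x ^+ 2 - 1) >= 0.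
    have h1 : z ^+ 2 >= z * (x * y) by nra.
    nra.
  nra.
have e : x * (x ^+ 2 - 1 + D) - y * z * (x ^+ 2 - 1) = (x * y - z) * (x * z - y).
  rewrite /D; ring.
have e2 : y * z * (x ^+ 2 - 1) <= x * (x ^+ 2 - 1 + D).
  rewrite -subr_ge0 e; apply: mulr_ge0; lra.
have : s * (x ^+ 2 - 1 + D) <= 2 * D by nra.
nra.
Qed.


Lemma core (x y z s : R) : 1 <= x -> 1 <= y -> 1 <= z -> 0 <= s -> s <= 1 ->
  0 < 1 + 2 * x * y * z - x ^+ 2 - y ^+ 2 - z ^+ 2 ->
  s * (x ^+ 2 - 1) <= 1 + 2 * x * y * z - x ^+ 2 - y ^+ 2 - z ^+ 2 ->
  s * (y ^+ 2 - 1) <= 1 + 2 * x * y * z - x ^+ 2 - y ^+ 2 - z ^+ 2 ->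
  s * (z ^+ 2 - 1) <= 1 + 2 * x * y * z - x ^+ 2 - y ^+ 2 - z ^+ 2 ->
  s * (x ^+ 2 + y ^+ 2 + z ^+ 2 + 6 * x * y * z) * (x ^+ 2 - 1) <=
    24 * x ^+ 2 * (1 + 2 * x * y * z - x ^+ 2 - y ^+ 2 - z ^+ 2).
Proof.
move=> x1 y1 z1 s0 s1 D0 hx hy hz.
have h := @core_x x y z s x1 y1 z1 s0 s1 D0 hx hy hz.
have ex := @le2yz x y z x1 y1 z1 D0.
have ey : y <= 2 * x * z.
  apply: (@le2yz y x z y1 x1 z1); lra.
have ez : z <= 2 * x * y.
  apply: (@le2yz z x y z1 x1 y1); lra.
have N : x ^+ 2 + y ^+ 2 + z ^+ 2 + 6 * x * y * z <= 12 * (x * y * z) by nra.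
have x0 : 0 <= x ^+ 2 - 1 by nra.
have : s * (x ^+ 2 + y ^+ 2 + z ^+ 2 + 6 * x * y * z) * (x ^+ 2 - 1) <=
   s * (12 * (x * y * z)) * (x ^+ 2 - 1).
  by apply: ler_wpM2r => //; apply: ler_wpM2l.
nra.
Qed.


Lemma kcore (a b c g1 g2 g3 s : R) : 0 < a -> 0 < b -> 0 < c ->
  b * c <= g1 -> c * a <= g2 -> a * b <= g3 -> 0 <= s -> s <= 1 ->
  0 < a^+2 * b^+2 * c^+2 + 2 * g1 * g2 * g3 - a^+2 * g1^+2 - b^+2 * g2^+2 - c^+2 * g3^+2 ->
  s * (a^+2 * (g1^+2 - b^+2 * c^+2)) <= a^+2 * b^+2 * c^+2 + 2 * g1 * g2 * g3 - a^+2 * g1^+2 - b^+2 * g2^+2 - c^+2 * g3^+2 ->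
  s * (b^+2 * (g2^+2 - c^+2 * a^+2)) <= a^+2 * b^+2 * c^+2 + 2 * g1 * g2 * g3 - a^+2 * g1^+2 - b^+2 * g2^+2 - c^+2 * g3^+2 ->
  s * (c^+2 * (g3^+2 - a^+2 * b^+2)) <= a^+2 * b^+2 * c^+2 + 2 * g1 * g2 * g3 - a^+2 * g1^+2 - b^+2 * g2^+2 - c^+2 * g3^+2 ->
  s * (a^+2 * g1^+2 + b^+2 * g2^+2 + c^+2 * g3^+2 + 6 * g1 * g2 * g3) * (g1^+2 - b^+2 * c^+2)
   <= 24 * g1^+2 * (a^+2 * b^+2 * c^+2 + 2 * g1 * g2 * g3 - a^+2 * g1^+2 - b^+2 * g2^+2 - c^+2 * g3^+2).
Proof.
move=> a0 b0 c0 h1 h2 h3 s0 s1.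
set DD := _ - _ - _ - _ => DD0 hx hy hz.
pose x := g1 / (b * c); pose y := g2 / (c * a); pose z := g3 / (a * b).
have an : a != 0 by rewrite gt_eqF.
have bn : b != 0 by rewrite gt_eqF.
have cn : c != 0 by rewrite gt_eqF.
have x1 : 1 <= x by rewrite /x ler_pdivlMr ?mulr_gt0 // mul1r.
have y1 : 1 <= y by rewrite /y ler_pdivlMr ?mulr_gt0 // mul1r.
have z1 : 1 <= z by rewrite /z ler_pdivlMr ?mulr_gt0 // mul1r.
pose K := a^+2 * b^+2 * c^+2.
have K0 : 0 < K by rewrite /K !mulr_gt0 // exprn_gt0.
have eD : (1 + 2 * x * y * z - x ^+ 2 - y ^+ 2 - z ^+ 2) * K = DD.
  rewrite /x /y /z /K /DD; field; by rewrite ?an ?bn ?cn.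
have ex : s * (x ^+ 2 - 1) * K = s * (a^+2 * (g1^+2 - b^+2 * c^+2)).
  rewrite /x /K; field; by rewrite ?an ?bn ?cn.
have ey : s * (y ^+ 2 - 1) * K = s * (b^+2 * (g2^+2 - c^+2 * a^+2)).
  rewrite /y /K; field; by rewrite ?an ?bn ?cn.
have ez : s * (z ^+ 2 - 1) * K = s * (c^+2 * (g3^+2 - a^+2 * b^+2)).
  rewrite /z /K; field; by rewrite ?an ?bn ?cn.
have D0 : 0 < 1 + 2 * x * y * z - x ^+ 2 - y ^+ 2 - z ^+ 2.
  by rewrite -(pmulr_lgt0 _ K0) eD.
have hx' : s * (x ^+ 2 - 1) <= 1 + 2 * x * y * z - x ^+ 2 - y ^+ 2 - z ^+ 2.
  by rewrite -(ler_pM2r K0) ex eD.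
have hy' : s * (y ^+ 2 - 1) <= 1 + 2 * x * y * z - x ^+ 2 - y ^+ 2 - z ^+ 2.
  by rewrite -(ler_pM2r K0) ey eD.
have hz' : s * (z ^+ 2 - 1) <= 1 + 2 * x * y * z - x ^+ 2 - y ^+ 2 - z ^+ 2.
  by rewrite -(ler_pM2r K0) ez eD.
have := @core x y z s x1 y1 z1 s0 s1 D0 hx' hy' hz'.
pose K2 := K * (b^+2 * c^+2).
have K20 : 0 < K2 by rewrite /K2 mulr_gt0 // mulr_gt0 // exprn_gt0.
rewrite -(ler_pM2r K20).
have -> : s * (x ^+ 2 + y ^+ 2 + z ^+ 2 + 6 * x * y * z) * (x ^+ 2 - 1) * K2 =
  s * (a^+2 * g1^+2 + b^+2 * g2^+2 + c^+2 * g3^+2 + 6 * g1 * g2 * g3) * (g1^+2 - b^+2 * c^+2).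
  rewrite /x /y /z /K2 /K; field; by rewrite ?an ?bn ?cn.
have -> : 24 * x ^+ 2 * (1 + 2 * x * y * z - x ^+ 2 - y ^+ 2 - z ^+ 2) * K2 =
  24 * g1^+2 * ((1 + 2 * x * y * z - x ^+ 2 - y ^+ 2 - z ^+ 2) * K).
  rewrite /x /K2 /K; field; by rewrite ?an ?bn ?cn.
by rewrite eD.
Qed.

End Core.


Section Side.
Variable R : realFieldType.

Lemma sq_sum_le (x y : R) : (x + y) ^+ 2 <= 2 * (x ^+ 2 + y ^+ 2).
Proof. have : 0 <= (x - y) ^+ 2 by rewrite sqr_ge0. lra. Qed.

Lemma sqle (x y : R) : x ^+ 2 <= y ^+ 2 -> 0 <= y -> -y <= x /\ x <= y.
Proof. move=> h y0; split; nra. Qed.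

Lemma side_id (p1 p2 b1 b2 c1 c2 : R) :
  let s := 1 - (p1 * p1 + p2 * p2) in
  let E := p1 * (b2 - c2) - p2 * (b1 - c1) + (b1 * c2 - b2 * c1) in
  let L1 := (s + p2 ^+ 2) * (b2 - c2) - (- (p1 * p2)) * (b1 - c1) + E * p1 in
  let L2s := s * (- (b1 - c1)) + E * p2 in
  let Lam := (1 - (b1 * c1 + b2 * c2)) ^+ 2 - (1 - (b1 * b1 + b2 * b2)) * (1 - (c1 * c1 + c2 * c2)) in
  s * L1 ^+ 2 + L2s ^+ 2 = (s + p2 ^+ 2) * (s * Lam + E ^+ 2).
Proof. cbv zeta; ring. Qed.

Lemma side_ok (p1 p2 b1 b2 c1 c2 lam D a bb eps : R) :
  let s := 1 - (p1 * p1 + p2 * p2) in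
  let E := p1 * (b2 - c2) - p2 * (b1 - c1) + (b1 * c2 - b2 * c1) in
  let Lam := (1 - (b1 * c1 + b2 * c2)) ^+ 2 - (1 - (b1 * b1 + b2 * b2)) * (1 - (c1 * c1 + c2 * c2)) in
  0 < s -> 0 <= eps -> eps <= 1/5 ->
  2 * a ^+ 2 * (s + p2 ^+ 2) <= eps ^+ 2 * s ->
  2 * bb ^+ 2 * (s + p2 ^+ 2) <= eps ^+ 2 * s ^+ 2 ->
  E = lam * D -> 0 < lam -> D != 0 ->
  eps ^+ 2 * (s * Lam) <= (1 - 2 * eps) * E ^+ 2 ->
  0 <= lam + ((a * (s + p2 ^+ 2)) * (b2 - c2) - (- (a * p1 * p2) + bb) * (b1 - c1)) / D.
Proof.
move=> s E Lam s0 ep0 ep1 ha hb hE l0 D0 hc.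
set Q := s + p2 ^+ 2.
have Q0 : 0 < Q by rewrite /Q; have := sqr_ge0 p2; lra.
have p1le : p1 * p1 <= 1 by have := sqr_ge0 p2; rewrite /s in s0; nra.
set PV := a * p1 * s + bb * p2.
have hPV : PV ^+ 2 <= eps ^+ 2 * s ^+ 2.
  have h1 := sq_sum_le (a * p1 * s) (bb * p2).
  have h2 : Q * (2 * ((a * p1 * s) ^+ 2 + (bb * p2) ^+ 2)) <= eps ^+ 2 * s ^+ 2 * Q.
    have : (2 * a ^+ 2 * Q) * (p1 * p1 * s ^+ 2) <= (eps ^+ 2 * s) * (p1 * p1 * s ^+ 2).
      have pp : 0 <= p1 * p1 by rewrite -expr2 sqr_ge0.
      by apply: ler_wpM2r => //; rewrite mulr_ge0 // sqr_ge0.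
    have : (2 * bb ^+ 2 * Q) * (p2 ^+ 2) <= (eps ^+ 2 * s ^+ 2) * p2 ^+ 2.
      by apply: ler_wpM2r => //; rewrite sqr_ge0.
    have : eps ^+ 2 * s * (p1 * p1 * s ^+ 2) <= eps ^+ 2 * s ^+ 2 * s.
      have e : eps ^+ 2 * s ^+ 2 * s - eps ^+ 2 * s * (p1 * p1 * s ^+ 2) = (eps ^+ 2 * s ^+ 2 * s) * (1 - p1 * p1) by ring.
      rewrite -subr_ge0 e; apply: mulr_ge0; last by rewrite subr_ge0.
      apply: mulr_ge0; [apply: mulr_ge0; exact: sqr_ge0 | exact: ltW].
    rewrite /Q; nra.
  have : Q * PV ^+ 2 <= Q * (eps ^+ 2 * s ^+ 2).
    apply: le_trans (ler_wpM2l (ltW Q0) h1) _; lra.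
  by rewrite ler_pM2l.
set L1 := Q * (b2 - c2) - (- (p1 * p2)) * (b1 - c1) + E * p1.
set L2s := s * (- (b1 - c1)) + E * p2.
set U := s * a * L1 + bb * L2s.
have hid : s * L1 ^+ 2 + L2s ^+ 2 = Q * (s * Lam + E ^+ 2).
  by rewrite /L1 /L2s /Q /E /Lam /s; ring.
have hU : U ^+ 2 <= (s * (1 - eps)) ^+ 2 * E ^+ 2.
  have h1 := sq_sum_le (s * a * L1) (bb * L2s).
  have h2 : Q * (2 * ((s * a * L1) ^+ 2 + (bb * L2s) ^+ 2)) <= eps ^+ 2 * s ^+ 2 * (s * L1 ^+ 2 + L2s ^+ 2).
    have : (2 * a ^+ 2 * Q) * (s ^+ 2 * L1 ^+ 2) <= (eps ^+ 2 * s) * (s ^+ 2 * L1 ^+ 2).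
      by apply: ler_wpM2r => //; rewrite mulr_ge0 // sqr_ge0.
    have : (2 * bb ^+ 2 * Q) * (L2s ^+ 2) <= (eps ^+ 2 * s ^+ 2) * L2s ^+ 2.
      by apply: ler_wpM2r => //; rewrite sqr_ge0.
    nra.
  rewrite hid in h2.
  have h3 : U ^+ 2 <= eps ^+ 2 * s ^+ 2 * (s * Lam + E ^+ 2).
    have : Q * U ^+ 2 <= Q * (eps ^+ 2 * s ^+ 2 * (s * Lam + E ^+ 2)).
      apply: le_trans (ler_wpM2l (ltW Q0) h1) _; lra.
    by rewrite ler_pM2l.
  have h4 : eps ^+ 2 * (s * Lam + E ^+ 2) <= (1 - eps) ^+ 2 * E ^+ 2 by nra.
  have s20 : 0 <= s ^+ 2 by rewrite sqr_ge0.
  apply: le_trans h3 _.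
  have := ler_wpM2l s20 h4. nra.
have el : s * ((a * (s + p2 ^+ 2)) * (b2 - c2) - (- (a * p1 * p2) + bb) * (b1 - c1)) = U - E * PV.
  by rewrite /U /L1 /L2s /PV /Q /E; ring.
set l := (a * (s + p2 ^+ 2)) * (b2 - c2) - (- (a * p1 * p2) + bb) * (b1 - c1).
set e := `|E|.
have e2 : e ^+ 2 = E ^+ 2 by rewrite /e real_normK // num_real.
have e0 : 0 <= e by rewrite normr_ge0.
have [U1 U2] : - (s * (1 - eps) * e) <= U /\ U <= s * (1 - eps) * e.
  apply: sqle; last by apply: mulr_ge0 => //; apply: mulr_ge0; [exact: ltW | lra].
  by rewrite exprMn e2.
have [W1 W2] : - (s * eps * e) <= E * PV /\ E * PV <= s * eps * e.
  apply: sqle; last by apply: mulr_ge0 => //; apply: mulr_ge0 => //; exact: ltW.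
  rewrite !exprMn e2; have := ler_wpM2l (sqr_ge0 E) hPV; nra.
have hl : (s * l) ^+ 2 <= (s * e) ^+ 2.
  rewrite el; have : - (s * e) <= U - E * PV <= s * e by apply/andP; split; nra.
  move=> /andP[h1 h2]; have : 0 <= s * e by apply: mulr_ge0 => //; exact: ltW.
  nra.
have hl2 : l ^+ 2 <= (lam * D) ^+ 2.
  rewrite -hE -e2; move: hl; rewrite !exprMn ler_pM2l //; rewrite exprn_gt0 //.
have [h _] : - lam <= l / D /\ l / D <= lam.
  apply: sqle; last exact: ltW.
  have D2 : 0 < D ^+ 2 by rewrite lt_neqAle sqr_ge0 andbT eq_sym sqrf_eq0.
  rewrite expr_div_n ler_pdivrMr //.
  by rewrite -exprMn.
lra.
Qed.
End Side.

Section Foot.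
Variable R : realType.
Implicit Types A B C X : pt R.
Definition sq (p : pt R) := 1 - nrm2 p.
Definition gg (p q : pt R) := 1 - dot p q.
Definition det3 (A B C : pt R) := (B.1 - A.1) * (C.2 - A.2) - (B.2 - A.2) * (C.1 - A.1).

Lemma foot A B C (sg : R) :
  in_disk A -> in_disk B -> in_disk C -> det3 A B C != 0 ->
  (forall t, 0 <= t -> t <= 1 ->
     (1 + sg ^+ 2) * (sq A * sq (comb3 t (1 - t) 0 B C B)) <=
       gg A (comb3 t (1 - t) 0 B C B) ^+ 2) ->
  gg A B * sq C <= gg B C * gg C A ->
  gg C A * sq B <= gg B C * gg A B ->
  sg ^+ 2 * (sq A * (gg B C ^+ 2 - sq B * sq C)) <= det3 A B C ^+ 2.
Proof.
move=> hA hB hC hD H h1 h2.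
have Lam0 : 0 <= gg B C ^+ 2 - sq B * sq C.
  by rewrite subr_ge0; exact: aczel.
have sA0 : 0 < sq A by rewrite /sq subr_gt0.
set bt := gg B C * gg C A - gg A B * sq C.
set gm := gg B C * gg A B - gg C A * sq B.
have bt0 : 0 <= bt by rewrite subr_ge0.
have gm0 : 0 <= gm by rewrite subr_ge0.
have e1 : bt * gg A B + gm * gg C A = sq A * (gg B C ^+ 2 - sq B * sq C) + det3 A B C ^+ 2.
  rewrite /bt /gm /sq /gg /det3 /nrm2 /dot; ring.
have e2 : bt ^+ 2 * sq B + 2 * bt * gm * gg B C + gm ^+ 2 * sq C =
   (bt * gg A B + gm * gg C A) * (gg B C ^+ 2 - sq B * sq C).
  rewrite /bt /gm /sq /gg /det3 /nrm2 /dot; ring.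
have D2 : 0 < det3 A B C ^+ 2.
  by rewrite lt_neqAle sqr_ge0 andbT eq_sym sqrf_eq0.
set Phi := bt * gg A B + gm * gg C A.
have Phi0 : 0 < Phi.
  rewrite /Phi e1; have : 0 <= sq A * (gg B C ^+ 2 - sq B * sq C) by rewrite mulr_ge0 // ltW.
  lra.
have S0 : 0 < bt + gm.
  rewrite lt_neqAle addr_ge0 // andbT; apply/eqP => S0.
  have b0 : bt = 0 by lra.
  have g0 : gm = 0 by lra.
  by move: Phi0; rewrite /Phi b0 g0 !mul0r addr0 ltxx.
have Sn : bt + gm != 0 by rewrite gt_eqF.
pose t := bt / (bt + gm).
have t0 : 0 <= t by rewrite /t divr_ge0 // ltW.
have t1 : t <= 1 by rewrite /t ler_pdivrMr // mul1r lerDl.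
have := H t t0 t1.
have eg : gg A (comb3 t (1 - t) 0 B C B) = Phi / (bt + gm).
  rewrite /Phi /t /gg /comb3 /dot /=; field => //.
have es : sq (comb3 t (1 - t) 0 B C B) =
   (bt ^+ 2 * sq B + 2 * bt * gm * gg B C + gm ^+ 2 * sq C) / (bt + gm) ^+ 2.
  rewrite /t /sq /gg /comb3 /nrm2 /dot /=; field => //.
rewrite eg es e2 -/Phi.
set L := gg B C ^+ 2 - sq B * sq C.
rewrite expr_div_n => hh0.
have hh : (1 + sg ^+ 2) * (sq A * (Phi * L)) <= Phi ^+ 2.
  have Sq : 0 < (bt + gm) ^+ 2 by rewrite exprn_gt0.
  have Sq' : 0 < ((bt + gm) ^+ 2)^-1 by rewrite invr_gt0.
  rewrite -(ler_pM2r Sq'); move: hh0; by rewrite !mulrA.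
have : (1 + sg ^+ 2) * sq A * L <= Phi.
  rewrite -(ler_pM2r Phi0) -expr2; apply: le_trans hh; rewrite le_eqVlt; apply/orP; left; apply/eqP; ring.
rewrite /Phi e1 -/L. lra.
Qed.

End Foot.

Arguments sq {R}. Arguments gg {R}. Arguments det3 {R}.
Set Implicit Arguments. Unset Strict Implicit.

Section Main.
Variable R : realType.
Implicit Types A B C P X : pt R.

Lemma gg_sym A B : gg A B = gg B A.
Proof. by rewrite /gg /dot mulrC [A.2 * _]mulrC. Qed.

Lemma det3_rot A B C : det3 B C A = det3 A B C.
Proof. rewrite /det3; ring. Qed.

Lemma sq_gt0 A : in_disk A -> 0 < sq A.
Proof. by rewrite /sq subr_gt0. Qed.

Lemma gg_gt0 A B : in_disk A -> in_disk B -> 0 < gg A B.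
Proof. exact: (@dot_lt1 R). Qed.

Lemma prod_le_gg A B (a b : R) : in_disk A -> in_disk B -> 0 <= a -> 0 <= b ->
  a ^+ 2 = sq A -> b ^+ 2 = sq B -> a * b <= gg A B.
Proof.
move=> hA hB a0 b0 ea eb.
have := @aczel R A B hA hB; rewrite -/(sq A) -/(sq B) -/(gg A B) -ea -eb => h.
have g0 := gg_gt0 hA hB.
have h2 : (a * b) ^+ 2 <= gg A B ^+ 2 by rewrite exprMn.
by have [_ ->] := @sqle R (a * b) (gg A B) h2 (ltW g0).
Qed.

Lemma case_max A B C (sg a b c : R) :
  in_disk A -> in_disk B -> in_disk C -> det3 A B C != 0 -> 0 <= sg ->
  0 < a -> 0 < b -> 0 < c -> a ^+ 2 = sq A -> b ^+ 2 = sq B -> c ^+ 2 = sq C ->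
  (forall t, 0 <= t -> t <= 1 ->
     (1 + sg ^+ 2) * (sq A * sq (comb3 t (1 - t) 0 B C B)) <=
       gg A (comb3 t (1 - t) 0 B C B) ^+ 2) ->
  b * gg C A <= a * gg B C -> c * gg A B <= a * gg B C ->
  [/\ sg ^+ 2 * (sq A * (gg B C ^+ 2 - sq B * sq C)) <= det3 A B C ^+ 2,
      sg ^+ 2 * (sq B * (gg C A ^+ 2 - sq C * sq A)) <= det3 A B C ^+ 2 &
      sg ^+ 2 * (sq C * (gg A B ^+ 2 - sq A * sq B)) <= det3 A B C ^+ 2].
Proof.
move=> hA hB hC hD sg0 a0 b0 c0 ea eb ec H h1 h2.
have gAB := gg_gt0 hA hB; have gBC := gg_gt0 hB hC; have gCA := gg_gt0 hC hA.
have ca := prod_le_gg hC hA (ltW c0) (ltW a0) ec ea.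
have ab := prod_le_gg hA hB (ltW a0) (ltW b0) ea eb.
have f1 : gg A B * sq C <= gg B C * gg C A.
  rewrite -ec; have : c * (c * gg A B) <= c * (a * gg B C) by rewrite ler_pM2l.
  have : (c * a) * gg B C <= gg C A * gg B C by rewrite ler_pM2r.
  nra.
have f2 : gg C A * sq B <= gg B C * gg A B.
  rewrite -eb; have : b * (b * gg C A) <= b * (a * gg B C) by rewrite ler_pM2l.
  have : (a * b) * gg B C <= gg A B * gg B C by rewrite ler_pM2r.
  nra.
have hA' := @foot R A B C sg hA hB hC hD H f1 f2.
split => //.
- apply: le_trans hA'; rewrite ler_wpM2l ?sqr_ge0 //.
  rewrite -ea -eb -ec; have : (b * gg C A) ^+ 2 <= (a * gg B C) ^+ 2.
    by rewrite ler_sqr ?nnegrE // mulr_ge0 // ltW.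
  nra.
- apply: le_trans hA'; rewrite ler_wpM2l ?sqr_ge0 //.
  rewrite -ea -eb -ec; have : (c * gg A B) ^+ 2 <= (a * gg B C) ^+ 2.
    by rewrite ler_sqr ?nnegrE // mulr_ge0 // ltW.
  nra.
Qed.


Lemma all_heights A B C (sg a b c : R) :
  in_disk A -> in_disk B -> in_disk C -> det3 A B C != 0 -> 0 <= sg ->
  0 < a -> 0 < b -> 0 < c -> a ^+ 2 = sq A -> b ^+ 2 = sq B -> c ^+ 2 = sq C ->
  (forall t, 0 <= t -> t <= 1 ->
     (1 + sg ^+ 2) * (sq A * sq (comb3 t (1 - t) 0 B C B)) <=
       gg A (comb3 t (1 - t) 0 B C B) ^+ 2) ->
  (forall t, 0 <= t -> t <= 1 ->
     (1 + sg ^+ 2) * (sq B * sq (comb3 t (1 - t) 0 C A C)) <=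
       gg B (comb3 t (1 - t) 0 C A C) ^+ 2) ->
  (forall t, 0 <= t -> t <= 1 ->
     (1 + sg ^+ 2) * (sq C * sq (comb3 t (1 - t) 0 A B A)) <=
       gg C (comb3 t (1 - t) 0 A B A) ^+ 2) ->
  [/\ sg ^+ 2 * (sq A * (gg B C ^+ 2 - sq B * sq C)) <= det3 A B C ^+ 2,
      sg ^+ 2 * (sq B * (gg C A ^+ 2 - sq C * sq A)) <= det3 A B C ^+ 2 &
      sg ^+ 2 * (sq C * (gg A B ^+ 2 - sq A * sq B)) <= det3 A B C ^+ 2].
Proof.
move=> hA hB hC hD sg0 a0 b0 c0 ea eb ec HA HB HC.
have e1 : det3 C A B = det3 A B C by rewrite /det3; ring.
have e2 : det3 B C A = det3 A B C by rewrite /det3; ring.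
have [c1|c1] := lerP (b * gg C A) (a * gg B C); have [c2|c2] := lerP (c * gg A B) (a * gg B C).
- exact: (case_max hA hB hC hD sg0 a0 b0 c0 ea eb ec HA c1 c2).
- have [c3|c3] := lerP (a * gg B C) (c * gg A B); last by exfalso; lra.
  have [d1|d1] := lerP (b * gg C A) (c * gg A B).
    have hD' : det3 C A B != 0 by rewrite e1.
    have [x1 x2 x3] := case_max hC hA hB hD' sg0 c0 a0 b0 ec ea eb HC c3 d1.
    by rewrite e1 in x1 x2 x3; split.
  exfalso; lra.
- have d1 : c * gg A B <= b * gg C A by lra.
  have hD' : det3 B C A != 0 by rewrite e2.
  have [x1 x2 x3] := case_max hB hC hA hD' sg0 b0 c0 a0 eb ec ea HB d1 (ltW c1).
  by rewrite e2 in x1 x2 x3; split.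
- have [d1|d1] := lerP (c * gg A B) (b * gg C A).
    have hD' : det3 B C A != 0 by rewrite e2.
    have [x1 x2 x3] := case_max hB hC hA hD' sg0 b0 c0 a0 eb ec ea HB d1 (ltW c1).
    by rewrite e2 in x1 x2 x3; split.
  have hD' : det3 C A B != 0 by rewrite e1.
  have [x1 x2 x3] := case_max hC hA hB hD' sg0 c0 a0 b0 ec ea eb HC (ltW c2) (ltW d1).
  by rewrite e1 in x1 x2 x3; split.
Qed.


Lemma le_eqs (x y x' y' : R) : x = x' -> y = y' -> x' <= y' -> x <= y.
Proof. by move=> -> ->. Qed.

Lemma detsq A B C : det3 A B C ^+ 2 = sq A * sq B * sq C + 2 * gg A B * gg B C * gg C A
  - sq A * gg B C ^+ 2 - sq B * gg C A ^+ 2 - sq C * gg A B ^+ 2.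
Proof. rewrite /det3 /sq /gg /nrm2 /dot; ring. Qed.

Lemma side_conds A B C (sg a b c : R) :
  in_disk A -> in_disk B -> in_disk C -> det3 A B C != 0 -> 0 <= sg -> sg <= 1 ->
  0 < a -> 0 < b -> 0 < c -> a ^+ 2 = sq A -> b ^+ 2 = sq B -> c ^+ 2 = sq C ->
  sg ^+ 2 * (sq A * (gg B C ^+ 2 - sq B * sq C)) <= det3 A B C ^+ 2 ->
  sg ^+ 2 * (sq B * (gg C A ^+ 2 - sq C * sq A)) <= det3 A B C ^+ 2 ->
  sg ^+ 2 * (sq C * (gg A B ^+ 2 - sq A * sq B)) <= det3 A B C ^+ 2 ->
  let NK := sq A * gg B C ^+ 2 + sq B * gg C A ^+ 2 + sq C * gg A B ^+ 2 + 6 * gg B C * gg C A * gg A B in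
  [/\ sg ^+ 2 * NK * (gg B C ^+ 2 - sq B * sq C) <= 24 * gg B C ^+ 2 * det3 A B C ^+ 2,
      sg ^+ 2 * NK * (gg C A ^+ 2 - sq C * sq A) <= 24 * gg C A ^+ 2 * det3 A B C ^+ 2 &
      sg ^+ 2 * NK * (gg A B ^+ 2 - sq A * sq B) <= 24 * gg A B ^+ 2 * det3 A B C ^+ 2].
Proof.
move=> hA hB hC hD sg0 sg1 a0 b0 c0 ea eb ec h1 h2 h3 NK.
have bc := prod_le_gg hB hC (ltW b0) (ltW c0) eb ec.
have ca := prod_le_gg hC hA (ltW c0) (ltW a0) ec ea.
have ab := prod_le_gg hA hB (ltW a0) (ltW b0) ea eb.
have s0 : 0 <= sg ^+ 2 by rewrite sqr_ge0.
have s1 : sg ^+ 2 <= 1 by rewrite expr_le1.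
have D2 : 0 < det3 A B C ^+ 2 by rewrite lt_neqAle sqr_ge0 andbT eq_sym sqrf_eq0.
rewrite /NK; rewrite detsq in h1 h2 h3 D2 *; rewrite -ea -eb -ec in h1 h2 h3 D2 *.
set g1 := gg B C in h1 h2 h3 D2 *; set g2 := gg C A in h1 h2 h3 D2 *; set g3 := gg A B in h1 h2 h3 D2 *.
have E1 : a ^+ 2 * b ^+ 2 * c ^+ 2 + 2 * g3 * g1 * g2 - a ^+ 2 * g1 ^+ 2 - b ^+ 2 * g2 ^+ 2 - c ^+ 2 * g3 ^+ 2
  = a^+2 * b^+2 * c^+2 + 2 * g1 * g2 * g3 - a^+2 * g1^+2 - b^+2 * g2^+2 - c^+2 * g3^+2 by ring.
have E2 : a ^+ 2 * b ^+ 2 * c ^+ 2 + 2 * g3 * g1 * g2 - a ^+ 2 * g1 ^+ 2 - b ^+ 2 * g2 ^+ 2 - c ^+ 2 * g3 ^+ 2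
  = b^+2 * c^+2 * a^+2 + 2 * g2 * g3 * g1 - b^+2 * g2^+2 - c^+2 * g3^+2 - a^+2 * g1^+2 by ring.
have E3 : a ^+ 2 * b ^+ 2 * c ^+ 2 + 2 * g3 * g1 * g2 - a ^+ 2 * g1 ^+ 2 - b ^+ 2 * g2 ^+ 2 - c ^+ 2 * g3 ^+ 2
  = c^+2 * a^+2 * b^+2 + 2 * g3 * g1 * g2 - c^+2 * g3^+2 - a^+2 * g1^+2 - b^+2 * g2^+2 by ring.
rewrite E1 in h1 h2 h3 D2.
have K1 := @kcore R a b c g1 g2 g3 (sg ^+ 2) a0 b0 c0 bc ca ab s0 s1 D2 h1
  (le_eqs (erefl _) (erefl _) h2) (le_eqs (erefl _) (erefl _) h3).
rewrite -E1 E2 in h1 h2 h3 D2.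
have K2 := @kcore R b c a g2 g3 g1 (sg ^+ 2) b0 c0 a0 ca ab bc s0 s1 D2 h2 h3 h1.
rewrite -E2 E3 in h1 h2 h3 D2.
have K3 := @kcore R c a b g3 g1 g2 (sg ^+ 2) c0 a0 b0 ab bc ca s0 s1 D2 h3 h1 h2.
split.
- apply: le_eqs K1; ring.
- apply: le_eqs K2; ring.
- apply: le_eqs K3; ring.
Qed.



Lemma par_mem A B C P (lA lB lC eps a bb : R) :
  det3 A B C != 0 -> P = comb3 lA lB lC A B C -> 0 < lA -> 0 < lB -> 0 < lC ->
  lA + lB + lC = 1 -> 0 < sq P -> 0 <= eps -> eps <= 1/5 ->
  2 * a ^+ 2 * (sq P + P.2 ^+ 2) <= eps ^+ 2 * sq P ->
  2 * bb ^+ 2 * (sq P + P.2 ^+ 2) <= eps ^+ 2 * sq P ^+ 2 ->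
  eps ^+ 2 * (sq P * (gg B C ^+ 2 - sq B * sq C)) <= (1 - 2 * eps) * det3 P B C ^+ 2 ->
  eps ^+ 2 * (sq P * (gg C A ^+ 2 - sq C * sq A)) <= (1 - 2 * eps) * det3 P C A ^+ 2 ->
  eps ^+ 2 * (sq P * (gg A B ^+ 2 - sq A * sq B)) <= (1 - 2 * eps) * det3 P A B ^+ 2 ->
  htriangle A B C (P.1 + a * (sq P + P.2 ^+ 2), P.2 - a * P.1 * P.2 + bb).
Proof.
move=> hD eP lA0 lB0 lC0 l1 s0 ep0 ep1 ha hb hcA hcB hcC.
have elC : lC = 1 - lA - lB by lra.
have EA : det3 P B C = lA * det3 A B C by rewrite eP elC /det3 /comb3 /=; ring.
have EB : det3 P C A = lB * det3 A B C by rewrite eP elC /det3 /comb3 /=; ring.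
have EC : det3 P A B = lC * det3 A B C by rewrite eP elC /det3 /comb3 /=; ring.
have eP1 : P.1 = lA * A.1 + lB * B.1 + lC * C.1 by rewrite eP /comb3.
have eP2 : P.2 = lA * A.2 + lB * B.2 + lC * C.2 by rewrite eP /comb3.
clear eP; move: hD hcA hcB hcC EA EB EC ha hb s0 eP1 eP2.
case: A => a1 a2; case: B => b1 b2; case: C => c1 c2; case: P => p1 p2 /=.
rewrite /det3 /sq /gg /nrm2 /dot /= => hD hcA hcB hcC EA EB EC ha hb s0 eP1 eP2.
set D := (b1 - a1) * (c2 - a2) - (b2 - a2) * (c1 - a1).
set sP := 1 - (p1 * p1 + p2 * p2).
have SA := @side_ok R p1 p2 b1 b2 c1 c2 lA D a bb eps s0 ep0 ep1 ha hb.
have SB := @side_ok R p1 p2 c1 c2 a1 a2 lB D a bb eps s0 ep0 ep1 ha hb.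
have SC := @side_ok R p1 p2 a1 a2 b1 b2 lC D a bb eps s0 ep0 ep1 ha hb.
have eA : p1 * (b2 - c2) - p2 * (b1 - c1) + (b1 * c2 - b2 * c1) = (b1 - p1) * (c2 - p2) - (b2 - p2) * (c1 - p1) by ring.
have eB : p1 * (c2 - a2) - p2 * (c1 - a1) + (c1 * a2 - c2 * a1) = (c1 - p1) * (a2 - p2) - (c2 - p2) * (a1 - p1) by ring.
have eC : p1 * (a2 - b2) - p2 * (a1 - b1) + (a1 * b2 - a2 * b1) = (a1 - p1) * (b2 - p2) - (a2 - p2) * (b1 - p1) by ring.
have gs : forall x1 x2 y1 y2 : R, 1 - (x1 * y1 + x2 * y2) = 1 - (y1 * x1 + y2 * x2).
  by move=> *; ring.
move: SA SB SC; rewrite /= eA eB eC EA EB EC => /(_ erefl lA0 hD) SA /(_ erefl lB0 hD) SB /(_ erefl lC0 hD) SC.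
rewrite EA in hcA; rewrite EB in hcB; rewrite EC in hcC.
have {}SA := SA hcA.
have {}SB := SB hcB.
have {}SC := SC hcC.
set Q := 1 - (p1 * p1 + p2 * p2) + p2 ^+ 2 in SA SB SC *.
set V1 := a * Q; set V2 := - (a * p1 * p2) + bb.
have eV2 : p2 - a * p1 * p2 + bb = p2 + V2 by rewrite /V2; ring.
rewrite eV2.
exists (lA + (V1 * (b2 - c2) - V2 * (b1 - c1)) / D).
exists (lB + (V1 * (c2 - a2) - V2 * (c1 - a1)) / D).
exists (lC + (V1 * (a2 - b2) - V2 * (a1 - b1)) / D).
have Dn : D != 0 by [].
split => //.
- rewrite -l1 /D; field => //.
- rewrite /comb3 /=; congr (_, _).
  + rewrite eP1 elC /D; field => //.
  + rewrite eP2 elC /D; field => //.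
Qed.



Lemma dens_bounds (p1 p2 eps a bb : R) :
  let s := 1 - (p1 * p1 + p2 * p2) in
  0 < s -> 0 <= eps -> eps <= 1/10 ->
  2 * a ^+ 2 * (s + p2 ^+ 2) <= eps ^+ 2 * s ->
  2 * bb ^+ 2 * (s + p2 ^+ 2) <= eps ^+ 2 * s ^+ 2 ->
  let x1 := p1 + a * (s + p2 ^+ 2) in
  let x2 := p2 - a * p1 * p2 + bb in
  0 < 1 - (x1 * x1 + x2 * x2) /\ 1 - (x1 * x1 + x2 * x2) <= 2 * s.
Proof.
move=> s s0 ep0 ep1 ha hb x1 x2.
set Q := s + p2 ^+ 2 in ha hb.
have Q0 : 0 < Q by rewrite /Q; have := sqr_ge0 p2; lra.
have sQ : s <= Q by rewrite /Q; have := sqr_ge0 p2; lra.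
have p1le : p1 * p1 <= 1 by have := sqr_ge0 p2; rewrite /s in s0; nra.
have pp : 0 <= p1 * p1 by rewrite -expr2 sqr_ge0.
set PV := a * p1 * s + bb * p2.
set VV := (a * Q) ^+ 2 + (- (a * p1 * p2) + bb) ^+ 2.
have eX : 1 - (x1 * x1 + x2 * x2) = s - 2 * PV - VV.
  by rewrite /x1 /x2 /PV /VV /Q /s; ring.
have hPV : PV ^+ 2 <= eps ^+ 2 * s ^+ 2.
  have h1 := @sq_sum_le R (a * p1 * s) (bb * p2).
  have h2 : Q * (2 * ((a * p1 * s) ^+ 2 + (bb * p2) ^+ 2)) <= eps ^+ 2 * s ^+ 2 * Q.
    have : (2 * a ^+ 2 * Q) * (p1 * p1 * s ^+ 2) <= (eps ^+ 2 * s) * (p1 * p1 * s ^+ 2).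
      by apply: ler_wpM2r => //; rewrite mulr_ge0 // sqr_ge0.
    have : (2 * bb ^+ 2 * Q) * (p2 ^+ 2) <= (eps ^+ 2 * s ^+ 2) * p2 ^+ 2.
      by apply: ler_wpM2r => //; rewrite sqr_ge0.
    have : eps ^+ 2 * s * (p1 * p1 * s ^+ 2) <= eps ^+ 2 * s ^+ 2 * s.
      have e : eps ^+ 2 * s ^+ 2 * s - eps ^+ 2 * s * (p1 * p1 * s ^+ 2) = (eps ^+ 2 * s ^+ 2 * s) * (1 - p1 * p1) by ring.
      rewrite -subr_ge0 e; apply: mulr_ge0; last by rewrite subr_ge0.
      apply: mulr_ge0; [apply: mulr_ge0; exact: sqr_ge0 | exact: ltW].
    rewrite /Q; nra.
  have : Q * PV ^+ 2 <= Q * (eps ^+ 2 * s ^+ 2).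
    apply: le_trans (ler_wpM2l (ltW Q0) h1) _; lra.
  by rewrite ler_pM2l.
have [PV1 PV2] : - (eps * s) <= PV /\ PV <= eps * s.
  by apply: (@sqle R); [rewrite exprMn | apply: mulr_ge0 => //; exact: ltW].
have hVV : VV <= 2 * eps ^+ 2 * s.
  have h1 : (- (a * p1 * p2) + bb) ^+ 2 <= 2 * ((a * p1 * p2) ^+ 2 + bb ^+ 2).
    have := @sq_sum_le R (- (a * p1 * p2)) bb; by rewrite sqrrN.
  have eQ : Q ^+ 2 + (p1 * p2) ^+ 2 = Q - s * (p1 * p1) by rewrite /Q /s; ring.
  have h2 : a ^+ 2 * (Q ^+ 2 + (p1 * p2) ^+ 2) <= a ^+ 2 * Q.
    rewrite eQ; apply: ler_wpM2l; first exact: sqr_ge0.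
    have : 0 <= s * (p1 * p1) by apply: mulr_ge0 => //; exact: ltW.
    lra.
  have h3 : 2 * a ^+ 2 * Q <= eps ^+ 2 * s by [].
  have h4 : 2 * bb ^+ 2 * Q <= eps ^+ 2 * s * Q.
    apply: le_trans hb _; rewrite expr2 mulrA; apply: ler_wpM2l => //.
    by apply: mulr_ge0; [exact: sqr_ge0 | exact: ltW].
  have h5 : 2 * bb ^+ 2 <= eps ^+ 2 * s.
    by move: h4; rewrite ler_pM2r.
  have e : 2 * (a ^+ 2 * (Q ^+ 2 + (p1 * p2) ^+ 2)) = (a * Q) ^+ 2 + 2 * (a * p1 * p2) ^+ 2 + (a * Q) ^+ 2 by ring.
  have : 0 <= (a * Q) ^+ 2 by exact: sqr_ge0.
  rewrite /VV; lra.
rewrite eX; split.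
  have : eps ^+ 2 <= eps / 10 by nra.
  nra.
  have VV0 : 0 <= VV by rewrite /VV addr_ge0 // sqr_ge0.
  have : eps * s <= s / 10 by nra.
  lra.
Qed.


Lemma cond_lemma (sg NK Lam g D W : R) : 0 <= sg -> sg <= 1 -> 0 < W ->
  sg ^+ 2 * NK * Lam <= 24 * g ^+ 2 * D ^+ 2 ->
  (sg / 10) ^+ 2 * (NK / W ^+ 2 * Lam) <= (1 - 2 * (sg / 10)) * (g / W * D) ^+ 2.
Proof.
move=> s0 s1 W0 h.
have W2 : 0 < W ^+ 2 by rewrite exprn_gt0.
have e1 : (sg / 10) ^+ 2 * (NK / W ^+ 2 * Lam) = (sg ^+ 2 * NK * Lam) / 100 / W ^+ 2.
  by field; rewrite gt_eqF.
have e2 : (1 - 2 * (sg / 10)) * (g / W * D) ^+ 2 = (1 - sg / 5) * (g ^+ 2 * D ^+ 2) / W ^+ 2.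
  by field; rewrite gt_eqF.
rewrite e1 e2 ler_pM2r ?invr_gt0 //.
have : 0 <= g ^+ 2 * D ^+ 2 by rewrite mulr_ge0 // sqr_ge0.
nra.
Qed.

Lemma detP A B C (lA lB lC : R) : lA + lB + lC = 1 ->
  [/\ det3 (comb3 lA lB lC A B C) B C = lA * det3 A B C,
      det3 (comb3 lA lB lC A B C) C A = lB * det3 A B C &
      det3 (comb3 lA lB lC A B C) A B = lC * det3 A B C].
Proof.
move=> l1; have elC : lC = 1 - lA - lB by lra.
by rewrite elC /det3 /comb3 /=; split; ring.
Qed.

Lemma sqP_id A B C (lA lB lC : R) : lA + lB + lC = 1 ->
  sq (comb3 lA lB lC A B C) = lA ^+ 2 * sq A + lB ^+ 2 * sq B + lC ^+ 2 * sq C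
     + 2 * lA * lB * gg A B + 2 * lB * lC * gg B C + 2 * lC * lA * gg C A.
Proof.
move=> l1; have elC : lC = 1 - lA - lB by lra.
by rewrite elC /sq /gg /nrm2 /dot /comb3 /=; ring.
Qed.

Lemma dens_ge X (s : R) : 0 < sq X -> sq X <= 2 * s ->
  (Num.sqrt (2 * s) ^+ 3)^-1 <= area_density X.
Proof.
move=> h1 h2; rewrite /area_density.
have q0 : 0 < Num.sqrt (1 - nrm2 X) by rewrite sqrtr_gt0.
have s0 : 0 <= 2 * s by apply: le_trans (ltW h1) h2.
have le : Num.sqrt (1 - nrm2 X) <= Num.sqrt (2 * s).
  by rewrite ler_sqrt //; exact: h2.
have z0 : 0 < Num.sqrt (2 * s) by apply: lt_le_trans le.
rewrite lef_pV2 ?posrE ?exprn_gt0 //.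
by apply: lerXn2r => //; rewrite nnegrE ltW.
Qed.

End Main.

Section M2.
Variable R : realType.

Lemma par_props (A B C : pt R) (lA lB lC eps : R) :
  det3 A B C != 0 -> 0 < lA -> 0 < lB -> 0 < lC -> lA + lB + lC = 1 ->
  0 < sq (comb3 lA lB lC A B C) -> 0 <= eps -> eps <= 1 / 10 ->
  let P := comb3 lA lB lC A B C in
  eps ^+ 2 * (sq P * (gg B C ^+ 2 - sq B * sq C)) <= (1 - 2 * eps) * det3 P B C ^+ 2 ->
  eps ^+ 2 * (sq P * (gg C A ^+ 2 - sq C * sq A)) <= (1 - 2 * eps) * det3 P C A ^+ 2 ->
  eps ^+ 2 * (sq P * (gg A B ^+ 2 - sq A * sq B)) <= (1 - 2 * eps) * det3 P A B ^+ 2 ->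
  let s := sq P in let Q := s + P.2 ^+ 2 in
  let q := Num.sqrt s in let r := Num.sqrt (2 * Q) in let z := Num.sqrt (2 * s) in
  let al := eps * q / r in let be := eps * s / r in
  let k := - (P.1 * P.2) / Q in let c0 := P.2 - k * P.1 in
  forall X, par P.1 (al * Q) k c0 be X -> htriangle A B C X /\ (z ^+ 3)^-1 <= area_density X.
Proof.
move=> hD lA0 lB0 lC0 l1 sP0 ep0 ep1 P cA cB cC s Q q r z al be k c0 X.
have s0 : 0 < s := sP0.
have Q0 : 0 < Q by rewrite /Q; have := sqr_ge0 P.2; lra.
have Qn : Q != 0 by rewrite gt_eqF.
have q0 : 0 < q by rewrite sqrtr_gt0.
have r0 : 0 < r by rewrite sqrtr_gt0; lra.
have eq2 : q ^+ 2 = s by rewrite sqr_sqrtr // ltW.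
have er2 : r ^+ 2 = 2 * Q by rewrite sqr_sqrtr //; lra.
have rn : r != 0 by rewrite gt_eqF.
have ep15 : eps <= 1 / 5 by lra.
case: X => x y; rewrite /par => -[/andP[x1 x2] /andP[y1 y2]].
have xx : (x, y).1 = x by []. have yy : (x, y).2 = y by [].
rewrite !xx !yy in x1 x2 y1 y2.
set a' := (x - P.1) / Q; set bb := y - k * x - c0.
have ex : x = P.1 + a' * Q by rewrite /a'; field.
have ey : y = P.2 - a' * P.1 * P.2 + bb by rewrite /bb /c0 /k /a'; field.
have ha' : 2 * a' ^+ 2 * Q <= eps ^+ 2 * s.
  have h1 : (x - P.1) ^+ 2 <= (al * Q) ^+ 2.
    have al0 : 0 <= al.
      by rewrite /al; apply: divr_ge0; [apply: mulr_ge0 => //; exact: ltW | exact: ltW].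
    have : 0 <= al * Q by apply: mulr_ge0 => //; exact: ltW.
    nra.
  have e1 : (x - P.1) ^+ 2 = Q ^+ 2 * a' ^+ 2 by rewrite /a'; field.
  have e2 : (al * Q) ^+ 2 = Q ^+ 2 * (eps ^+ 2 * s / (2 * Q)).
    by rewrite /al exprMn expr_div_n exprMn eq2 er2; field.
  rewrite e1 e2 ler_pM2l ?exprn_gt0 // in h1.
  have Q2 : 0 <= 2 * Q by lra.
  by apply: (le_eqs _ _ (ler_wpM2l Q2 h1)); [ring | field].

have hb' : 2 * bb ^+ 2 * Q <= eps ^+ 2 * s ^+ 2.
  have h1 : bb ^+ 2 <= be ^+ 2.
    have : 0 <= be.
      by rewrite /be; apply: divr_ge0; [apply: mulr_ge0 => //; exact: ltW | exact: ltW].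
    rewrite /bb; nra.
  have e2 : be ^+ 2 = eps ^+ 2 * s ^+ 2 / (2 * Q).
    by rewrite /be expr_div_n exprMn er2.
  rewrite e2 in h1.
  have Q2 : 0 <= 2 * Q by lra.
  by apply: (le_eqs _ _ (ler_wpM2l Q2 h1)); [ring | field].

have eX : (x, y) = (P.1 + a' * (sq P + P.2 ^+ 2), P.2 - a' * P.1 * P.2 + bb).
  by rewrite -ex -ey.
rewrite eX; split.
  exact: (par_mem hD erefl lA0 lB0 lC0 l1 sP0 ep0 ep15 ha' hb' cA cB cC).
apply: dens_ge.
  have := @dens_bounds R P.1 P.2 eps a' bb s0 ep0 ep1 ha' hb'.
  by move=> [].
have := @dens_bounds R P.1 P.2 eps a' bb s0 ep0 ep1 ha' hb'.
by move=> [].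
Qed.

End M2.

Unset Implicit Arguments.

Theorem lemma5 (R : realType) :
  exists c : R, 0 < c /\
    forall A B C : pt R,
      in_disk A -> in_disk B -> in_disk C -> noncollinear A B C ->
      ((c * Num.min 1 (height A B C ^+ 2))%:E <= harea (htriangle A B C))%E.
Proof.
exists (1/800); split; first lra.
move=> A B C hA hB hC hN.
have hD : det3 A B C != 0 := hN.
have [h0 [HA [HB HC]]] := @height_props R A B C hA hB hC.
set h := height A B C in h0 HA HB HC *.
have eh1 : 1 + h <= expR h := expR_ge1Dx h.
set sg := Num.min 1 ((expR h - 1) / 2).
have sg0 : 0 <= sg by rewrite le_min ler01 /=; lra.
have sg1 : sg <= 1 by rewrite ge_min lexx.
have sgh : sg <= (expR h - 1) / 2 by rewrite ge_min lexx orbT.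
have hmin : Num.min 1 (h ^+ 2) <= 4 * sg ^+ 2.
  have m1 : Num.min 1 (h ^+ 2) <= 1 by rewrite ge_min lexx.
  have m2 : Num.min 1 (h ^+ 2) <= h ^+ 2 by rewrite ge_min lexx orbT.
  have [c|c] := lerP 1 ((expR h - 1) / 2).
    rewrite /sg (min_l c) expr1n mulr1; lra.
  rewrite /sg (min_r (ltW c)).
  have : h ^+ 2 <= (expR h - 1) ^+ 2.
    apply: lerXn2r; rewrite ?nnegrE; lra.
  lra.
have dens0 : forall p : pt R, 0 <= area_density p.
  by move=> p; rewrite /area_density invr_ge0 exprn_ge0 // sqrtr_ge0.
have [sgz|sgp] := eqVneq sg 0.
  apply: (@le_trans _ _ 0%E).
    rewrite lee_fin; rewrite sgz in hmin.
    have : Num.min 1 (h ^+ 2) <= 0 by move: hmin; rewrite expr0n mulr0.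
    move=> hm; have c0 : 0 < 1 / 800 :> R by lra.
    rewrite (pmulr_rle0 _ c0); exact: hm.
  by apply: integral_ge0 => p _; rewrite lee_fin.
have sgp' : 0 < sg by rewrite lt_neqAle eq_sym sgp.
have hseg : forall (V Y Z : pt R), in_disk V -> in_disk Y -> in_disk Z ->
   (forall t, 0 <= t -> t <= 1 -> h <= hdist V (comb3 t (1 - t) 0 Y Z Y)) ->
   forall t, 0 <= t -> t <= 1 ->
     (1 + sg ^+ 2) * (sq V * sq (comb3 t (1 - t) 0 Y Z Y)) <= gg V (comb3 t (1 - t) 0 Y Z Y) ^+ 2.
  move=> V Y Z hV hY hZ Hh t t0 t1.
  have hX := @seg_in_disk R Y Z t hY hZ t0 t1.
  apply: (@cosh_bound R V _ sg hV hX sg0).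
  apply: (le_trans sgh).
  have := Hh t t0 t1; rewrite -ler_expR => e.
  lra.
have SA := hseg A B C hA hB hC HA.
have SB := hseg B C A hB hC hA HB.
have SC := hseg C A B hC hA hB HC.
have sqr_pos : forall V : pt R, in_disk V -> 0 < Num.sqrt (sq V) /\ Num.sqrt (sq V) ^+ 2 = sq V.
  move=> V hV; have := sq_gt0 hV => s0; split; first by rewrite sqrtr_gt0.
  by rewrite sqr_sqrtr // ltW.
have [a0 ea] := sqr_pos A hA.
have [b0 eb] := sqr_pos B hB.
have [c0 ec] := sqr_pos C hC.
have [h1 h2 h3] := all_heights hA hB hC hD sg0 a0 b0 c0 ea eb ec SA SB SC.
have [k1 k2 k3] := side_conds hA hB hC hD sg0 sg1 a0 b0 c0 ea eb ec h1 h2 h3.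
set NK := sq A * gg B C ^+ 2 + sq B * gg C A ^+ 2 + sq C * gg A B ^+ 2 +
     6 * gg B C * gg C A * gg A B in k1 k2 k3.
have gAB := gg_gt0 hA hB; have gBC := gg_gt0 hB hC; have gCA := gg_gt0 hC hA.
have sA0 := sq_gt0 hA; have sB0 := sq_gt0 hB; have sC0 := sq_gt0 hC.
set W := gg B C + gg C A + gg A B.
have W0 : 0 < W by rewrite /W; lra.
have Wn : W != 0 by rewrite gt_eqF.
set lA := gg B C / W; set lB := gg C A / W; set lC := gg A B / W.
have lA0 : 0 < lA by rewrite divr_gt0.
have lB0 : 0 < lB by rewrite divr_gt0.
have lC0 : 0 < lC by rewrite divr_gt0.
have l1 : lA + lB + lC = 1 by rewrite /lA /lB /lC /W; field.
set P := comb3 lA lB lC A B C.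
have [eA eB eC] := detP A B C l1.
have esP : sq P = NK / W ^+ 2.
  rewrite sqP_id; last exact: l1.
  rewrite /lA /lB /lC /NK; field; try exact: Wn.
have NK0 : 0 < NK.
  rewrite /NK; have : 0 < 6 * gg B C * gg C A * gg A B by rewrite !mulr_gt0 //; lra.
  have : 0 <= sq A * gg B C ^+ 2 by rewrite mulr_ge0 ?sqr_ge0 // ltW.
  have : 0 <= sq B * gg C A ^+ 2 by rewrite mulr_ge0 ?sqr_ge0 // ltW.
  have : 0 <= sq C * gg A B ^+ 2 by rewrite mulr_ge0 ?sqr_ge0 // ltW.
  lra.
have sP0 : 0 < sq P by rewrite esP divr_gt0 // exprn_gt0.
have cA := cond_lemma sg0 sg1 W0 k1.
have cB := cond_lemma sg0 sg1 W0 k2.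
have cC := cond_lemma sg0 sg1 W0 k3.
rewrite -esP -/lA -/lB -/lC -eA -eB -eC in cA cB cC.
set eps := sg / 10 in cA cB cC.
have ep0 : 0 <= eps by rewrite /eps; lra.
have ep1 : eps <= 1 / 10 by rewrite /eps; lra.
have epp : 0 < eps by rewrite /eps; lra.
have Hpar := par_props hD lA0 lB0 lC0 l1 sP0 ep0 ep1 cA cB cC.
pose s := sq P; pose Q := s + P.2 ^+ 2.
pose q := Num.sqrt s; pose r := Num.sqrt (2 * Q); pose z := Num.sqrt (2 * s).
pose al := eps * q / r; pose be := eps * s / r.
pose k := - (P.1 * P.2) / Q; pose c0' := P.2 - k * P.1.
have Hp : forall X, par P.1 (al * Q) k c0' be X -> htriangle A B C X /\ (z ^+ 3)^-1 <= area_density X := Hpar.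
clear Hpar.
have s0 : 0 < s := sP0.
have Q0 : 0 < Q by rewrite /Q; have := sqr_ge0 P.2; lra.
have q0 : 0 < q by rewrite sqrtr_gt0.
have r0 : 0 < r by rewrite sqrtr_gt0; lra.
have z0 : 0 < z by rewrite sqrtr_gt0; lra.
have eq2 : q ^+ 2 = s by rewrite sqr_sqrtr // ltW.
have er2 : r ^+ 2 = 2 * Q by rewrite sqr_sqrtr //; lra.
have ez2 : z ^+ 2 = 2 * s by rewrite sqr_sqrtr //; lra.
have al0 : 0 < al by rewrite /al divr_gt0 // mulr_gt0.
have be0 : 0 < be by rewrite /be divr_gt0 // mulr_gt0.
have w0 : 0 < al * Q by rewrite mulr_gt0.
have m0 : 0 <= (z ^+ 3)^-1 by rewrite invr_ge0 exprn_ge0 // ltW.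
have f0 : forall x : pt R, (0 <= (area_density x)%:E)%E by move=> x; rewrite lee_fin.
have fA : forall x, par P.1 (al * Q) k c0' be x ->
    htriangle A B C x /\ (((z ^+ 3)^-1)%:E <= (area_density x)%:E)%E.
  by move=> x hx; have [t d] := Hp x hx; split => //; rewrite lee_fin.
have I1 := @int_lbE _ _ R ((@lebesgue_measure R) \x (@lebesgue_measure R))%E
   (htriangle A B C) (par P.1 (al * Q) k c0' be) (fun p => (area_density p)%:E)
   ((z ^+ 3)^-1) (@par_meas R P.1 (al * Q) k c0' be) m0 f0 fA.
have I2 := @par_measure R P.1 (al * Q) k c0' be w0 be0.
have rn : r != 0 by rewrite gt_eqF.
have zn : z != 0 by rewrite gt_eqF.
have sn : s != 0 by rewrite gt_eqF.
have Qn : Q != 0 by rewrite gt_eqF.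
have num : 1 / 800 * Num.min 1 (h ^+ 2) <= (z ^+ 3)^-1 * (2 * be * (2 * (al * Q))).
  have e1 : 2 * be * (2 * (al * Q)) = 4 * eps ^+ 2 * s * q * Q / r ^+ 2.
    by rewrite /be /al; field.
  rewrite e1 er2 (exprSr z 2) ez2.
  have e3 : (2 * s * z)^-1 * (4 * eps ^+ 2 * s * q * Q / (2 * Q)) = eps ^+ 2 * (q / z).
    by field; rewrite zn Qn sn.
  rewrite e3.
  have qz : 1 / 2 <= q / z.
    rewrite ler_pdivlMr //.
    have : z ^+ 2 <= (2 * q) ^+ 2 by rewrite exprMn eq2 ez2; lra.
    nra.
  have : eps ^+ 2 / 2 <= eps ^+ 2 * (q / z).
    have ee : 0 <= eps ^+ 2 by exact: sqr_ge0.
    have := ler_wpM2l ee qz; lra.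
  rewrite /eps; lra.
rewrite /harea.
apply: le_trans I1.
rewrite -[X in (X <= _)%E]/((1 / 800 * Num.min 1 (h ^+ 2))%:E).
apply: (@le_trans _ _ ((z ^+ 3)^-1%:E * (2 * be * (2 * (al * Q)))%:E)%E).
  by rewrite -EFinM lee_fin.
apply: lee_pmul.
- by rewrite lee_fin.
- by rewrite lee_fin; apply/ltW; apply: mulr_gt0; [apply: mulr_gt0; [lra | exact: be0] | apply: mulr_gt0; [lra | exact: w0]].
- exact: lexx.
- exact: I2.
Qed.
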